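(* Let $n\ge 3$ and consider the cycle graph on nodes $1,\dots,n$ with arbitrary measurements $\widetilde{R}_{12},\dots,\widetilde{R}_{n-1,n},\widetilde{R}_{n1}\in\mathrm{SO}(3)$. For each $k\in\{0,\dots,n-1\}$, the point $R=(R_1,\dots,R_n)$ with $R_1=I_3$ and $$R_i=\Big(\prod_{s=1}^{i-1}\widetilde{R}_{s,s+1}\Big)^{\top}E_k^{\,i-1},\qquad i\in\{2,\dots,n\},$$ is a stationary point of $f$ on $\mathrm{SO}(3)^n$, and at this point $f(R)=-3n-2n\operatorname{Tr}(E_k)=-3n-2n\big(1+2\cos(\gamma/n-2k\pi/n)\big)$.
   Context: Cycle-graph rotation averaging setup. Let $n\ge 3$. The cycle graph has nodes $1,\dots,n$ and edges $\{i,i+1\}$ for $i=1,\dots,n-1$ together with $\{n,1\}$; write $i\sim j$ if $\{i,j\}$ is an edge. Each edge carries a measured rotation $\widetilde{R}_{ij}\in\mathrm{SO}(3)$, with the convention $\widetilde{R}_{ji}=\widetilde{R}_{ij}^\top$. Define the symmetric $3n\times 3n$ block matrix $\widetilde{R}$ whose $(i,j)$ $3\times3$ block is $I_3$ if $i=j$, $\widetilde{R}_{ij}$ if $i\sim j$, and $0$ otherwise. For $R=(R_1,\dots,R_n)\in\mathrm{SO}(3)^n$, write $R=[R_1^\top\ \cdots\ R_n^\top]^\top\in\mathbb{R}^{3n\times 3}$ and define $f(R):=-\operatorname{Tr}(R^\top\widetilde{R}R)$; the rotation averaging problem is to minimize $f$ over $\mathrm{SO}(3)^n$. The cycle error is $E:=\widetilde{R}_{12}\widetilde{R}_{23}\cdots\widetilde{R}_{n-1,n}\widetilde{R}_{n1}\in\mathrm{SO}(3)$.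 Write $E=\exp(\gamma[\hat n]_\times)$ with unit axis $\hat n$ and angle $\gamma=\angle(E)\in[-\pi,\pi]$. For $k\in\{0,\dots,n-1\}$, $E_k:=\exp\big((\gamma/n-2k\pi/n)[\hat n]_\times\big)$. *)

(* Defs.v *)
From HB Require Import structures.
From mathcomp Require Import all_boot all_order all_algebra.
From mathcomp Require Import all_classical all_reals all_analysis.
Set Implicit Arguments. Unset Strict Implicit. Unset Printing Implicit Defensive.
Import Order.TTheory GRing.Theory Num.Theory.
Import numFieldNormedType.Exports.
Local Open Scope ring_scope.

(* Nodes 1..n of the paper are the ordinals 0..n-1 of 'I_n.
   Edge {i, i+1} (cyclically, {n,1}) is {i, ordS i}. *)

Section CycleRA.
Variable R : realType.

Definition SO3 (Q : 'M[R]_3) : Prop := Q^T *m Q = 1%:M /\ \det Q = 1.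

Definition hat (v : 'cV[R]_3) : 'M[R]_3 :=
  \matrix_(i < 3, j < 3)
    (if (i == 0 :> nat) && (j == 1 :> nat) then - v 2%:R 0
     else if (i == 0 :> nat) && (j == 2 :> nat) then v 1%:R 0
     else if (i == 1 :> nat) && (j == 0 :> nat) then v 2%:R 0
     else if (i == 1 :> nat) && (j == 2 :> nat) then - v 0 0
     else if (i == 2 :> nat) && (j == 0 :> nat) then - v 1%:R 0
     else if (i == 2 :> nat) && (j == 1 :> nat) then v 0 0
     else 0).

(* exp(theta [u]_x) for a unit axis u, in closed (Rodrigues) form:
   exp(theta K) = I + sin theta K + (1 - cos theta) K^2  (K = [u]_x, |u| = 1). *)
Definition expso3 (u : 'cV[R]_3) (theta : R) : 'M[R]_3 :=
  1%:M + sin theta *: hat u + (1 - cos theta) *: (hat u *m hat u).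

Definition unit_vec (u : 'cV[R]_3) : Prop := \sum_(i < 3) u i 0 ^+ 2 = 1.

Variable n : nat.

(* meas i = R~_{i,i+1} (indices cyclic; meas (n-1) = R~_{n,1}) *)
(* (i,j) block of the 3n x 3n matrix R~ *)
Definition Rtilde_blk (meas : 'I_n -> 'M[R]_3) (i j : 'I_n) : 'M[R]_3 :=
  if i == j then 1%:M
  else if j == ordS i then meas i
  else if i == ordS j then (meas j)^T
  else 0.

(* f(R) = - Tr(R^T R~ R), with R = [R_1^T ... R_n^T]^T, written blockwise *)
Definition cost (meas : 'I_n -> 'M[R]_3) (X : 'I_n -> 'M[R]_3) : R :=
  - \sum_(i < n) \sum_(j < n) \tr ((X i)^T *m Rtilde_blk meas i j *m X j).

Definition cycle_error (meas : 'I_n -> 'M[R]_3) : 'M[R]_3 :=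
  \prod_(i < n) meas i.

Definition skew (W : 'M[R]_3) : Prop := W^T = - W.

(* Stationary point of g on SO(3)^n: X in SO(3)^n, and the directional
   derivative of g at X vanishes along every tangent vector
   V = (X_i W_i)_i, W_i skew (tangent space of SO(3)^n at X). *)
Definition stationary (g : ('I_n -> 'M[R]_3) -> R) (X : 'I_n -> 'M[R]_3) : Prop :=
  (forall i, SO3 (X i)) /\
  forall W : 'I_n -> 'M[R]_3, (forall i, skew (W i)) ->
    is_derive (0 : R) (1 : R)
      (fun t : R => g (fun i => X i + t *: (X i *m W i))) 0.

Definition candidate (meas : 'I_n -> 'M[R]_3) (Ek : 'M[R]_3) (i : 'I_n) : 'M[R]_3 :=
  if i == 0 :> nat then 1%:M
  else (\prod_(s < n | (s < i)%N) meas s)^T *m (Ek ^+ i).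

End CycleRA.

(* Main.v *)
Require Import Defs.
From HB Require Import structures.
From mathcomp Require Import all_boot all_order all_algebra.
From mathcomp Require Import all_classical all_reals all_analysis.
Import Order.TTheory GRing.Theory Num.Theory.
Import numFieldNormedType.Exports.
From mathcomp Require Import ring lra zify.
Local Open Scope ring_scope.


Section E.
Variable R : realType.
Variable u : 'cV[R]_3.
Local Notation K := (hat u).
Local Notation sq := (u 0 0 ^+ 2 + u 1%:R 0 ^+ 2 + u 2%:R 0 ^+ 2).

Lemma unitE : unit_vec u -> sq = 1.
Proof. rewrite /unit_vec !big_ord_recr big_ord0 /= add0r => <-. by congr (u _ 0 ^+ 2 + u _ 0 ^+ 2 + u _ 0 ^+ 2); apply/val_inj. Qed.

Lemma hatT : K^T = - K.
Proof.
apply/matrixP => i j; rewrite !mxE.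
by case: i => [[|[|[|?]]] ?]; case: j => [[|[|[|?]]] ?] //=; rewrite ?opprK ?oppr0.
Qed.

Lemma hat3 : K *m K *m K = - sq *: K.
Proof.
apply/matrixP => i j; rewrite !mxE !big_ord_recr big_ord0 /= !mxE.
rewrite !big_ord_recr !big_ord0 /= !mxE.
by case: i => [[|[|[|?]]] ?]; case: j => [[|[|[|?]]] ?] //=; ring.
Qed.

Lemma trhat : \tr K = 0.
Proof. by rewrite /mxtrace !big_ord_recr big_ord0 /= !mxE /= !addr0. Qed.

Lemma trhat2 : \tr (K *m K) = - 2 * sq.
Proof. rewrite /mxtrace !big_ord_recr big_ord0 /= !mxE !big_ord_recr !big_ord0 /= !mxE /=; ring. Qed.
Definition pe (a : R) : {poly R} := 1 + (sin a)%:P * 'X + (1 - cos a)%:P * 'X^2.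

Lemma expso3E a : expso3 u a = horner_mx K (pe a).
Proof.
rewrite /pe /expso3 !mul_polyC !rmorphD /= !linearZ /= rmorph1 horner_mx_X.
rewrite -[1 in RHS]polyC1 horner_mx_C rmorphXn /= horner_mx_X expr2 mulmxE. by [].
Qed.

Lemma peD a b : pe a * pe b = pe (a + b) +
   ((sin a * (1 - cos b) + (1 - cos a) * sin b)%:P + ((1 - cos a) * (1 - cos b))%:P * 'X) * ('X^3 + 'X).
Proof.
rewrite /pe sinD cosD !(polyCD, polyCM, polyCN, polyCB). ring.
Qed.

Hypothesis hu : unit_vec u.

Lemma hat3' : horner_mx K ('X^3 + 'X) = 0.
Proof.
rewrite rmorphD rmorphXn /= horner_mx_X.
have := hat3; rewrite !mulmxE => h3.
by rewrite !exprS expr0 mulr1 mulrA h3 unitE // scaleN1r addNr.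
Qed.

Lemma expD a b : expso3 u a *m expso3 u b = expso3 u (a + b).
Proof.
by rewrite !expso3E mulmxE -rmorphM /= peD rmorphD rmorphM /= hat3' mulr0 addr0.
Qed.
Lemma exp0 : expso3 u 0 = 1%:M.
Proof. by rewrite /expso3 sin0 cos0 subrr !scale0r !addr0. Qed.

Lemma expT a : (expso3 u a)^T = expso3 u (- a).
Proof.
rewrite /expso3 !linearD /= !linearZ /= trmx1 trmx_mul hatT mulNmx mulmxN opprK.
by rewrite sinN cosN scaleNr scalerN.
Qed.

Lemma exp_orth a : (expso3 u a)^T *m expso3 u a = 1%:M.
Proof. by rewrite expT expD addNr exp0. Qed.

Lemma exp_orth' a : expso3 u a *m (expso3 u a)^T = 1%:M.
Proof. exact: mulmx1C (exp_orth a). Qed.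

Lemma expX a (m : nat) : expso3 u a ^+ m = expso3 u (m%:R * a).
Proof.
elim: m => [|m IH]; first by rewrite expr0 mul0r exp0.
by rewrite exprS IH -mulmxE expD -{1}(mul1r a) -mulrDl -natr1 addrC.
Qed.

Lemma exp_det a : \det (expso3 u a) = 1.
Proof.
have h2 : forall b, \det (expso3 u b) ^+ 2 = 1.
  by move=> b; rewrite expr2 -{1}det_tr -det_mulmx exp_orth det1.
have -> : a = a / 2 + a / 2 by rewrite -splitr.
rewrite -expD det_mulmx -expr2 h2 //.
Qed.

Lemma exp_tr a : \tr (expso3 u a) = 1 + 2 * cos a.
Proof.
rewrite /expso3 !mxtraceD !mxtraceZ mxtrace1 trhat trhat2 unitE //.
rewrite mulr0 addr0; ring.
Qed.
End E.

Lemma der_quad (R : realType) (a c : R) : is_derive (0:R) (1:R) (fun t : R => a + t ^+ 2 * c) 0.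
Proof.
have h := is_derive_poly (a%:P + c%:P * 'X * 'X) (0:R).
have -> : (fun t : R => a + t ^+ 2 * c) = horner (a%:P + c%:P * 'X * 'X).
  apply/funext => t; rewrite hornerD hornerC !hornerMX hornerC; ring.
have hd : (a%:P + c%:P * 'X * 'X)^`().[0] = 0.
  rewrite derivD derivC !derivM derivC derivX. rewrite !(hornerD, hornerMX, hornerC, hornerX, hornerM). ring.
rewrite hd in h; exact: h.
Qed.
Lemma expand_tr (R : realType) (Xi Xj Wi Wj B : 'M[R]_3) (t : R) :
  \tr ((Xi + t *: (Xi *m Wi))^T *m B *m (Xj + t *: (Xj *m Wj))) =
  \tr (Xi^T *m B *m Xj) + t * (\tr (Wi^T *m (Xi^T *m B *m Xj)) + \tr (Xi^T *m B *m Xj *m Wj))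
  + t ^+ 2 * \tr (Wi^T *m (Xi^T *m B *m Xj) *m Wj).
Proof.
rewrite [(_ + _)^T]linearD /= [(_ *: _)^T]linearZ /= trmx_mul.
rewrite !mulmxDl !mulmxDr -!scalemxAl -!scalemxAr.
rewrite !mxtraceD !mxtraceZ !mulmxA. ring.
Qed.
Lemma tr_sum (R : realType) (I : finType) (F : I -> 'M[R]_3) :
  \tr (\sum_i F i) = \sum_i \tr (F i).
Proof. exact: (big_morph _ (@mxtraceD _ _) (mxtrace0 _ _)). Qed.

Section Main.
Variable R : realType.
Variable n' : nat.
Local Notation n := n'.+1.
Hypothesis hn : (2 <= n')%N.
Variable meas : 'I_n -> 'M[R]_3.
Hypothesis hmeas : forall i, SO3 (meas i).
Variable Ek : 'M[R]_3.
Hypothesis hEk : Ek^T *m Ek = 1%:M.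
Hypothesis hEdet : \det Ek = 1.
Hypothesis hEn : Ek ^+ n = cycle_error meas.

Definition orth (Q : 'M[R]_3) := Q^T *m Q = 1%:M.
Lemma orth' Q : orth Q -> Q *m Q^T = 1%:M.
Proof. exact: mulmx1C. Qed.
Lemma orthM P Q : orth P -> orth Q -> orth (P *m Q).
Proof.
rewrite /orth trmx_mul => hP hQ.
by rewrite -mulmxA (mulmxA P^T) hP mul1mx.
Qed.
Lemma orth1 : orth 1%:M.
Proof. by rewrite /orth trmx1 mul1mx. Qed.
Lemma orthX Q m : orth Q -> orth (Q ^+ m).
Proof.
move=> hQ; elim: m => [|m IH]; first by rewrite expr0; exact: orth1.
by rewrite exprS -mulmxE; apply: orthM.
Qed.

Definition P (i : nat) := \prod_(s < n | (s < i)%N) meas s.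
Lemma Pnat i : (i <= n)%N -> P i = \prod_(0 <= s < i) meas (inord s).
Proof.
move=> hi; rewrite /P big_mkord (big_ord_widen n (fun s => meas (inord s)) hi).
by apply: eq_bigr => s _; rewrite inord_val.
Qed.
Lemma P0 : P 0 = 1%:M.
Proof. rewrite Pnat; last exact: leq0n. rewrite big_geq; first reflexivity. exact: leqnn. Qed.
Lemma PS i : (i < n)%N -> P i.+1 = P i *m meas (inord i).
Proof. move=> hi; rewrite !Pnat; [|exact: ltnW|exact: hi]. rewrite big_nat_recr; last exact: leq0n. rewrite mulmxE; reflexivity. Qed.
Lemma Porth i : (i <= n)%N -> orth (P i).
Proof.
elim: i => [|i IH] hi; first (rewrite P0; exact: orth1).
rewrite PS; last exact: hi.
apply: orthM; [apply: IH; exact: ltnW | exact: (hmeas _).1].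
Qed.
Lemma Pdet i : (i <= n)%N -> \det (P i) = 1.
Proof.
elim: i => [|i IH] hi; first by rewrite P0 det1.
by rewrite PS // det_mulmx IH ?(hmeas _).2 ?mulr1 // ltnW.
Qed.
Lemma cycE : cycle_error meas = P n' *m meas (inord n').
Proof.
rewrite -PS; last exact: ltnSn.
rewrite /P /cycle_error; apply: eq_bigl => s; by rewrite ltn_ord.
Qed.
Lemma orthT Q : orth Q -> orth Q^T.
Proof. rewrite /orth trmxK; exact: orth'. Qed.

Definition X (i : nat) := (P i)^T *m Ek ^+ i.
Lemma candE (i : 'I_n) : candidate meas Ek i = X i.
Proof.
rewrite /candidate /X; case: eqP => [->|_]; last reflexivity.
rewrite P0 trmx1 expr0 mul1mx; reflexivity.
Qed.
Lemma Xorth i : (i <= n)%N -> orth (X i).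
Proof.
move=> hi; apply: orthM; last exact: orthX.
apply: orthT; exact: Porth.
Qed.
Lemma Xdet i : (i <= n)%N -> \det (X i) = 1.
Proof.
move=> hi; rewrite /X det_mulmx det_tr Pdet // mul1r.
elim: i hi => [|i IH] hi; first by rewrite expr0 det1.
by rewrite exprS -mulmxE det_mulmx hEdet IH ?mul1r // ltnW.
Qed.

Lemma key (i : 'I_n) : (X i)^T *m meas i *m X (ordS i) = Ek.
Proof.
case: (ltnP i.+1 n) => h.
  have -> : (ordS i : nat) = i.+1 by rewrite /= modn_small.
  rewrite /X PS // inord_val trmx_mul trmxK.
  rewrite -(mulmxA _ (P i) (meas i)) mulmxA -(mulmxA _ (P i *m meas i)).
  rewrite orth'; last by apply: orthM; [apply: Porth; exact: ltnW | exact: (hmeas _).1].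
  rewrite mulmx1 exprSr -mulmxE mulmxA.
  have := orthX _ i hEk; rewrite /orth => ->; exact: mul1mx.
have ein : i = inord n'.
  apply/val_inj; rewrite /= inordK //; have := ltn_ord i; lia.
have -> : (ordS i : nat) = 0%N by rewrite /= ein inordK // modnn.
rewrite /X P0 trmx1 expr0 mulmx1 trmx_mul trmxK ein inordK // mulmx1 -mulmxA -cycE -hEn.
rewrite exprSr -mulmxE mulmxA.
have := orthX _ n' hEk; rewrite /orth => ->; exact: mul1mx.
Qed.
Lemma blk (i j : 'I_n) :
  (X i)^T *m Rtilde_blk meas i j *m X j = Rtilde_blk (fun _ => Ek) i j.
Proof.
rewrite /Rtilde_blk; case: (i =P j) => [<-|_].
  rewrite mulmx1; apply: Xorth; exact: ltnW.
case: (j =P ordS i) => [->|_]; first exact: key.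
case: (i =P ordS j) => [->|_]; last by rewrite mulmx0 mul0mx.
rewrite -(key j) [RHS]trmx_mul [X in _ = _ *m X]trmx_mul [X in _ = _ *m (_ *m X)]trmxK mulmxA; reflexivity.
Qed.

Lemma ordS_neq (i : 'I_n) : (ordS i == i) = false.
Proof.
apply/negbTE/eqP => /(congr1 val) /=; have := ltn_ord i; move: (nat_of_ord i) => k.
move=> hk; rewrite -/n => e.
case: (ltnP k.+1 n) => h; first by move: e; rewrite modn_small //; lia.
have ek : k.+1 = n by lia.
by move: e; rewrite ek modnn; lia.
Qed.

Lemma ordS2 (i : 'I_n) : (i == ordS (ordS i)) = false.
Proof.
apply/negbTE/eqP => /(congr1 val) /=; have := ltn_ord i; move: (nat_of_ord i) => k.
move=> hk; rewrite -/n => e.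
case: (ltnP k.+1 n) => h.
  move: e; rewrite (modn_small h).
  case: (ltnP k.+2 n) => h2; first by rewrite modn_small //; lia.
  have ek : k.+2 = n by lia.
  by rewrite ek modnn; lia.
have ek : k.+1 = n by lia.
by move: e; rewrite ek modnn modn_small; lia.
Qed.

Lemma eqS_pred (i j : 'I_n) : (i == ordS j) = (j == ord_pred i).
Proof.
by apply/eqP/eqP => [->|->]; [rewrite ordSK | rewrite ord_predK].
Qed.

Lemma RtE A (i j : 'I_n) : Rtilde_blk (fun _ => A) i j =
  (if i == j then 1%:M else 0 : 'M[R]_3) + (if j == ordS i then A else 0) +
  (if i == ordS j then A^T else 0).
Proof.
rewrite /Rtilde_blk; case: (i =P j) => [<-|ne].
  rewrite eq_sym ordS_neq addr0 addr0; reflexivity.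
case: (j =P ordS i) => [->|_].
  rewrite ordS2 add0r addr0; reflexivity.
case: (i =P ordS j) => _; rewrite !add0r; reflexivity.
Qed.

Lemma s2 (k : 'I_n) (M : 'M[R]_3) : \sum_(j < n) (if j == k then M else 0) = M.
Proof. by rewrite -big_mkcond big_pred1_eq. Qed.
Lemma s1 (k : 'I_n) (M : 'M[R]_3) : \sum_(j < n) (if k == j then M else 0) = M.
Proof. rewrite -[RHS](s2 k); apply: eq_bigr => j _; by rewrite eq_sym. Qed.
Lemma s3 (k : 'I_n) (M : 'M[R]_3) : \sum_(j < n) (if k == ordS j then M else 0) = M.
Proof. rewrite -[RHS](s2 (ord_pred k)); apply: eq_bigr => j _; by rewrite eqS_pred. Qed.

Lemma rowsum (A : 'M[R]_3) (i : 'I_n) : \sum_j Rtilde_blk (fun _ => A) i j = 1%:M + A + A^T.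
Proof.
rewrite (eq_bigr _ (fun j _ => RtE A i j)) !big_split /= s1 s2 s3; reflexivity.
Qed.
Lemma colsum (A : 'M[R]_3) (j : 'I_n) : \sum_i Rtilde_blk (fun _ => A) i j = 1%:M + A + A^T.
Proof.
rewrite (eq_bigr _ (fun i _ => RtE A i j)) !big_split /= s2 s3 s2; reflexivity.
Qed.
Lemma costX : cost meas (fun i => X i) = - (n%:R * (3 + 2 * \tr Ek)).
Proof.
rewrite /cost (eq_bigr (fun i => \tr (1%:M + Ek + Ek^T))).
  rewrite sumr_const card_ord !mxtraceD mxtrace1 mxtrace_tr -mulr_natl; ring.
move=> i _; rewrite -(rowsum Ek i) tr_sum; apply: eq_bigr => j _; by rewrite blk.
Qed.

Lemma statX (W : 'I_n -> 'M[R]_3) : (forall i, Defs.skew (W i)) ->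
  is_derive (0 : R) (1 : R) (fun t : R => cost meas (fun i : 'I_n => X i + t *: (X i *m W i))) 0.
Proof.
move=> hW.
pose M := fun i j : 'I_n => Rtilde_blk (fun _ => Ek) i j.
have hb : \sum_i \sum_j (\tr ((W i)^T *m M i j) + \tr (M i j *m W j)) = 0.
  under eq_bigr do rewrite big_split.
  rewrite big_split /=.
  rewrite (exchange_big _ _ _ _ _ (fun i j => \tr (M i j *m W j))) /=.
  rewrite (eq_bigr (fun i => - \tr ((1%:M + Ek + Ek^T) *m W i))); last first.
    move=> i _; rewrite -tr_sum -mulmx_sumr rowsum hW mulNmx linearN /= mxtrace_mulC; reflexivity.
  rewrite [X in _ + X](eq_bigr (fun j => \tr ((1%:M + Ek + Ek^T) *m W j))); last first.
    move=> j _; rewrite -tr_sum -mulmx_suml colsum; reflexivity.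
  by rewrite sumrN addNr.
have e : (fun t : R => cost meas (fun i : 'I_n => X i + t *: (X i *m W i))) =
    fun t => -(\sum_i \sum_j \tr (M i j)) + t ^+ 2 * (- \sum_i \sum_j \tr ((W i)^T *m M i j *m W j)).
  apply/funext => t; rewrite /cost.
  have ex : forall i j : 'I_n, \tr ((X i + t *: (X i *m W i))^T *m Rtilde_blk meas i j *m (X j + t *: (X j *m W j)))
     = \tr (M i j) + t * (\tr ((W i)^T *m M i j) + \tr (M i j *m W j)) + t^+2 * \tr ((W i)^T *m M i j *m W j).
    by move=> i j; rewrite expand_tr blk.
  rewrite (eq_bigr _ (fun i _ => eq_bigr _ (fun j _ => ex i j))).
  under eq_bigr do rewrite !big_split /= -!mulr_sumr.
  rewrite !big_split /= -!mulr_sumr hb mulr0 addr0 opprD mulrN; reflexivity.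
rewrite e; exact: der_quad.
Qed.
End Main.

Lemma sin_per (R : realType) (x : R) (k : nat) : sin (x + k%:R * (pi *+ 2)) = sin x.
Proof.
elim: k => [|k IH]; first by rewrite mul0r addr0.
by rewrite -natr1 mulrDl mul1r addrA sinD2pi.
Qed.
Lemma cos_per (R : realType) (x : R) (k : nat) : cos (x + k%:R * (pi *+ 2)) = cos x.
Proof.
elim: k => [|k IH]; first by rewrite mul0r addr0.
by rewrite -natr1 mulrDl mul1r addrA cosD2pi.
Qed.

Theorem mainTheorem5 (R : realType) (n : nat) (hn : (3 <= n)%N)
  (meas : 'I_n -> 'M[R]_3) (hmeas : forall i, SO3 (meas i))
  (u : 'cV[R]_3) (gamma : R)
  (hu : unit_vec u) (hgamma : - pi <= gamma <= pi)
  (hE : cycle_error meas = expso3 u gamma)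
  (k : nat) (hk : (k < n)%N) :
  let Ek := expso3 u (gamma / n%:R - 2 * k%:R * pi / n%:R) in
  let X := candidate meas Ek in
  stationary (cost meas) X /\
  cost meas X = - 3 * n%:R - 2 * n%:R * \tr Ek /\
  cost meas X = - 3 * n%:R - 2 * n%:R * (1 + 2 * cos (gamma / n%:R - 2 * k%:R * pi / n%:R)).
Proof.
move=> Ek Xc.
destruct n as [|n']; first by [].
have hn' : (2 <= n')%N by [].
set th := gamma / n'.+1%:R - 2 * k%:R * pi / n'.+1%:R.
have hEk : Ek^T *m Ek = 1%:M by exact: exp_orth.
have hEdet : \det Ek = 1 by exact: exp_det.
have hEn : Ek ^+ n'.+1 = cycle_error meas.
  rewrite hE /Ek expX //.
  have -> : n'.+1%:R * th = gamma - k%:R * (pi *+ 2).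
    rewrite /th; field; by rewrite addrC natr1 pnatr_eq0.
  rewrite /expso3 -[in RHS](subrK (k%:R * (pi *+ 2)) gamma) sin_per cos_per; reflexivity.
have hX : Xc = fun i => @X R n' meas Ek i by apply/funext => i; exact: candE.
rewrite hX; split; [split|split].
- by move=> i; split; [apply: Xorth | apply: Xdet]; rewrite // ltnW.
- move=> W hW; exact: statX.
- rewrite costX //; ring.
- rewrite costX // exp_tr //; ring.
Qed.
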